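(* Let $G$ be a finite connected graph with $\chi(G)<0$ and no vertices of valence 1 or 2. If $\ell\in\mathcal M(G)$ satisfies $\mathfrak h_G(\ell)<1$, then $F_G(\ell)>0$.
   Context: $G$ has oriented edges $E$, involution $e\mapsto\bar e$, orientation $E_+$; $\mathcal M(G)=\mathbb R_{>0}^{|E_+|}$ is the set of length functions $\ell\colon E_+\to\mathbb R_{>0}$ (extended to $E$ by $\ell(\bar e)=\ell(e)$). Entropy $\mathfrak h_G(\ell)=\lim_{t\to\infty}\frac1t\log\#\{\text{based circuits }\gamma:\ell(\gamma)\le t\}$, where a based circuit is a reduced closed edge path $(e_1,\dots,e_n)$ with $e_{i+1}\ne\bar e_i$ and $e_n\neq\bar e_1$. $A_G$ is the $|E|\times|E|$ matrix with $A_G(e,e')=1$ if $\tau(e)=o(e')$ and $e'\ne\bar e$, else $0$; $A_{G,\ell}(e,e')=A_G(e,e')\exp(-\ell(e))$, and $F_G(\ell)=\det(I-A_{G,\ell})$. *)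

(* Defs.v *)
From HB Require Import structures.
From mathcomp Require Import all_boot all_order all_algebra.
From mathcomp Require Import all_classical all_reals all_analysis.
Set Implicit Arguments. Unset Strict Implicit. Unset Printing Implicit Defensive.
Import Order.TTheory GRing.Theory Num.Theory.
Import numFieldNormedType.Exports.
Local Open Scope classical_set_scope.
Local Open Scope ring_scope.

(* A finite graph in Serre's sense: vertices V, oriented edges E, origin and
   terminus maps, and a fixed-point-free involution e |-> bar e reversing edges.
   Loops and multiple edges are allowed. *)
Record graph := Graph {
  gV : finType;
  gE : finType;
  gorig : gE -> gV;
  gterm : gE -> gV;
  gbar : gE -> gE;
  gbarK : involutive gbar;
  gbar_neq : forall e, gbar e != e;
  gorig_bar : forall e, gorig (gbar e) = gterm e
}.

Section GraphDefs.
Variable G : graph.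

(* valence of v: number of oriented edges with origin v (loops count twice) *)
Definition valence (v : gV G) : nat := #|[set e : gE G | gorig e == v]|.

(* Euler characteristic |V| - |E_+| = |V| - |E|/2 *)
Definition euler_char : rat := (#|gV G|%:R - (#|gE G|%:R / 2))%R.

Definition adjacent : rel (gV G) :=
  fun u v => [exists e : gE G, (gorig e == u) && (gterm e == v)].

Definition connected_graph : Prop := forall u v : gV G, connect adjacent u v.

Variable R : realType.

(* M(G): length functions on E_+ extended to E by l(bar e) = l(e); equivalently
   positive functions on E invariant under bar. *)
Definition length_fun (l : gE G -> R) : Prop :=
  (forall e, 0 < l e) /\ (forall e, l (gbar e) = l e).

Definition based_circuit n (s : n.+1.-tuple (gE G)) : bool :=
  [forall i : 'I_n.+1,
     (gterm (tnth s i) == gorig (tnth s (ordS i)))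
     && (tnth s (ordS i) != gbar (tnth s i))].

Definition path_length (l : gE G -> R) n (s : n.+1.-tuple (gE G)) : R :=
  \sum_(i < n.+1) l (tnth s i).

Definition count_circuits (l : gE G -> R) (t : R) (n : nat) : nat :=
  #|[set s : n.+1.-tuple (gE G) | based_circuit s && (path_length l s <= t)]|.

(* total number of based circuits with length <= t (the series is eventually
   constant since l is bounded below by a positive constant) *)
Definition num_circuits (l : gE G -> R) (t : R) : R :=
  limn (fun m : nat => (\sum_(n < m) (count_circuits l t n)%:R : R)).

(* h_G(l) = lim_{t -> oo} (1/t) log #{based circuits gamma : l(gamma) <= t};
   we state "the limit exists and equals h". *)
Definition is_entropy (l : gE G -> R) (h : R) : Prop :=
  (fun t : R => ln (num_circuits l t) / t) @ +oo --> h.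

Definition eidx (i : 'I_#|gE G|) : gE G := enum_val i.

Definition A_G : 'M[R]_#|gE G| :=
  \matrix_(i, j) (if (gterm (eidx i) == gorig (eidx j)) && (eidx j != gbar (eidx i))
                  then 1 else 0).

Definition A_Gl (l : gE G -> R) : 'M[R]_#|gE G| :=
  \matrix_(i, j) (A_G i j * expR (- l (eidx i))).

Definition F_G (l : gE G -> R) : R := \det (1%:M - A_Gl l).

End GraphDefs.

(* Main.v *)
Require Import Defs.
From HB Require Import structures.
From mathcomp Require Import all_boot all_order all_algebra.
From mathcomp Require Import all_classical all_reals all_analysis.
From mathcomp Require Import zify ring lra.
Import Order.TTheory GRing.Theory Num.Theory.
Set Implicit Arguments. Unset Strict Implicit. Unset Printing Implicit Defensive.

Section GraphPart.
Variable G : graph.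

Definition succ : rel (gE G) := fun e f => (gterm e == gorig f) && (f != gbar e).

Lemma gterm_bar (f : gE G) : gterm (gbar f) = gorig f.
Proof. by rewrite -gorig_bar gbarK. Qed.

Lemma gbar_inj : injective (@gbar G).
Proof. exact: (can_inj (@gbarK G)). Qed.

Lemma succ_rev e f : succ e f -> succ (gbar f) (gbar e).
Proof.
rewrite /succ gterm_bar gorig_bar => /andP[/eqP -> Hne]; rewrite eqxx /=.
apply/negP=> /eqP H; rewrite gbarK in H.
by rewrite H eqxx in Hne.
Qed.

Lemma connect_rev' e f : connect succ e f -> connect succ (gbar f) (gbar e).
Proof.
move/connectP=> [p Hp ->]; elim: p e Hp => [|x p IH] e /=; first by rewrite connect0.
case/andP=> Hex Hp; apply: connect_trans (IH x Hp) _.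
by apply: connect1; apply: succ_rev.
Qed.

Lemma card_part (S : {set gE G}) (phi : gE G -> gV G) :
  #|S| = (\sum_(v : gV G) #|[set f in S | phi f == v]|)%N.
Proof.
rewrite -sum1_card (partition_big phi predT) //=.
apply: eq_bigr => v _; rewrite -sum1_card; apply: eq_bigl => f.
by rewrite inE.
Qed.

Lemma valenceE v : valence v = #|[set e : gE G | gorig e == v]|.
Proof.
rewrite /valence; apply: eq_card => x; rewrite inE.
apply/idP/idP; rewrite in_setE //.
Qed.

Hypothesis Hval : forall v : gV G, valence v != 1%N /\ valence v != 2%N.

Lemma reach_bar e : connect succ e (gbar e).
Proof.
apply/negPn/negP => Hn.
pose S := [set f | connect succ e f].
have disj : forall f, f \in S -> gbar f \notin S.
  move=> f; rewrite !inE => Hf; apply/negP => Hbf; apply: (negP Hn).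
  apply: connect_trans Hf _; have := connect_rev' Hbf; by rewrite gbarK.
have clos : forall f g, connect succ e f -> succ f g -> connect succ e g.
  by move=> f g Hf Hfg; apply: connect_trans Hf (connect1 Hfg).
have key : forall v, (2 * #|[set f in S | gterm f == v]| <= #|[set f in S | gorig f == v]|)%N.
  move=> v; case: (set_0Vmem [set f in S | gterm f == v]) => [->|[f]].
    by rewrite cards0.
  rewrite inE => /andP[fS /eqP fv].
  have H1 : (#|[set f in S | gterm f == v]| <= 1)%N.
    rewrite -(cards1 f); apply: subset_leq_card; apply/fintype.subsetP => f'.
    rewrite !inE => /andP[f'S /eqP f'v]; apply/negPn/negP => nf.
    have : gbar f \in S.
      rewrite inE; apply: clos f'S _; rewrite /succ gorig_bar f'v fv eqxx /=.
      apply/negP => /eqP /gbar_inj H; by rewrite H eqxx in nf.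
    by rewrite (negbTE (disj f fS)).
  have H2 : (2 <= #|[set f in S | gorig f == v]|)%N.
    have sub : [set g | gorig g == v] :\ gbar f \subset [set f in S | gorig f == v].
      apply/fintype.subsetP => g; rewrite !inE => /andP[ng /eqP gv].
      rewrite gv eqxx andbT; apply: clos (_ : connect succ e f) _; first by rewrite inE in fS.
      by rewrite /succ fv gv eqxx.
    apply: leq_trans (subset_leq_card sub).
    have inb : gbar f \in [set g | gorig g == v] by rewrite inE gorig_bar fv.
    have := cardsD1 (gbar f) [set g | gorig g == v]; rewrite inb.
    have [h1 h2] := Hval v; rewrite valenceE in h1 h2.
    have h0 : (0 < #|[set g | gorig g == v]|)%N by apply/card_gt0P; exists (gbar f).
    move: h0 h1 h2; set c := #|[set g | gorig g == v]|; set d := #|_ :\ _|.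
    move=> h0 h1 h2 hc; rewrite add1n in hc.
    by case: c hc h0 h1 h2 => [|[|[|c]]] //= [<-].
  by apply: leq_trans H2; rewrite -{2}(muln1 2) leq_mul2l.
have eS : e \in S by rewrite inE connect0.
have := card_part S (@gterm G); have := card_part S (@gorig G).
move=> Hout Hin.
have : (2 * #|S| <= #|S|)%N.
  rewrite {1}Hin Hout big_distrr /=; apply: leq_sum => v _; exact: key.
have : (0 < #|S|)%N by apply/card_gt0P; exists e.
case: #|S| => // n _.
lia.
Qed.

Hypothesis Hc : connected_graph G.

Lemma base_reach e f : gterm e = gorig f -> connect succ e f.
Proof.
move=> H; case: (eqVneq f (gbar e)) => [->|ne]; first exact: reach_bar.
by apply: connect1; rewrite /succ H eqxx ne.
Qed.

Lemma irred e f : connect succ e f.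
Proof.
have := Hc (gterm e) (gorig f); move/connectP=> [p Hp Hl].
elim: p e Hp Hl => [|v p IH] e /=; first by move=> _ H; apply: base_reach.
case/andP => /existsP[d /andP[/eqP od /eqP td]] Hp Hl.
apply: connect_trans (base_reach (esym od)) _.
by apply: IH; rewrite td.
Qed.

End GraphPart.

Local Open Scope ring_scope.

Section MxPart.
Variable R : realType.

Lemma big_tuple_cons (X : finType) k (F : k.+1.-tuple X -> R) :
  \sum_(t : k.+1.-tuple X) F t = \sum_(x : X) \sum_(t : k.-tuple X) F (cons_tuple x t).
Proof.
rewrite pair_big /= (reindex (fun p : X * k.-tuple X => cons_tuple p.1 p.2)) //=.
exists (fun t : k.+1.-tuple X => (thead t, behead_tuple t)) => [[x t] _|t _] /=.
  by congr pair; apply: val_inj.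
by apply: val_inj => /=; case: t => -[|x s] //=.
Qed.

Lemma big_tuple0 (X : finType) (F : 0.-tuple X -> R) :
  \sum_(t : 0.-tuple X) F t = F [tuple].
Proof.
rewrite (big_pred1 [tuple]) // => t /=; symmetry; apply/eqP; exact: tuple0.
Qed.

Variable n : nat.
Implicit Types B : 'M[R]_n.

Lemma pow_ge0 B : (forall i j, 0 <= B i j) -> forall k i j, 0 <= (B ^+ k) i j.
Proof.
move=> H; elim=> [|k IH] i j; first by rewrite expr0 mxE ler0n.
by rewrite exprS mxE; apply: sumr_ge0 => m _; apply: mulr_ge0.
Qed.

Lemma pow_mul_le B : (forall i j, 0 <= B i j) -> forall k r i j,
  (B ^+ k) i j * (B ^+ r) j i <= (B ^+ (k + r)) i i.
Proof.
move=> H k r i j; rewrite exprD mxE (bigD1 j) //= lerDl.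
by apply: sumr_ge0 => m _; apply: mulr_ge0; apply: pow_ge0.
Qed.

Lemma diag_le_tr (M : 'M[R]_n) : (forall i, 0 <= M i i) -> forall i, M i i <= \tr M.
Proof.
move=> H i; rewrite /mxtrace (bigD1 i) //= lerDl.
by apply: sumr_ge0 => m _.
Qed.

Lemma pow_entry B k i j :
  (B ^+ k.+1) i j = \sum_(t : k.+1.-tuple 'I_n | tnth t ord0 == i)
     (\prod_(m < k) B (tnth t (widen_ord (leqnSn k) m)) (tnth t (lift ord0 m)))
        * B (tnth t ord_max) j.
Proof.
elim: k i j => [|k IH] i j.
  rewrite expr1 big_mkcond /= big_tuple_cons.
  rewrite (bigD1 i) //= [X in _ + X]big1 ?addr0; last first.
    by move=> x nx; rewrite big_tuple0 /= (tnth_nth x) /= (negbTE nx).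
  rewrite big_tuple0 /= (tnth_nth i) /= eqxx big_ord0 mul1r.
  by rewrite (tnth_nth i).
rewrite exprS mxE [in RHS]big_mkcond /= [in RHS]big_tuple_cons.
rewrite [in RHS](bigD1 i) //= [X in _ + X]big1 ?addr0; last first.
  by move=> x nx; apply: big1 => t _; rewrite (tnth_nth x) /= (negbTE nx).
under eq_bigr do rewrite IH.
under eq_bigr do rewrite big_distrr /=.
rewrite (exchange_big_dep xpredT) //=.
apply: eq_bigr => t _.
rewrite (big_pred1 (tnth t ord0)); last by move=> x; rewrite /= eq_sym.
have -> : tnth (cons_tuple i t) ord0 = i by rewrite (tnth_nth i).
rewrite eqxx big_ord_recl /= mulrA.
rewrite !(tnth_nth i) /= add0n; congr (_ * _ * _); apply: eq_bigr => m _.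
by rewrite !(tnth_nth i) /= !add0n.
Qed.

Lemma tr_pow B k :
  \tr (B ^+ k.+1) = \sum_(t : k.+1.-tuple 'I_n)
      \prod_(m < k.+1) B (tnth t m) (tnth t (ordS m)).
Proof.
rewrite /mxtrace; under eq_bigr do rewrite pow_entry.
rewrite (exchange_big_dep xpredT) //=.
apply: eq_bigr => t _.
rewrite (big_pred1 (tnth t ord0)); last by move=> x; rewrite /= eq_sym.
have e1 : forall m : 'I_k, ordS (widen_ord (leqnSn k) m) = lift ord0 m.
  move=> m; apply: val_inj; rewrite [LHS]/= modn_small //.
  by rewrite ltnS.
have e2 : ordS (@ord_max k) = ord0.
  by apply: val_inj; rewrite [LHS]/= modnn.
rewrite big_ord_recr e2.
by under [in RHS]eq_bigr do rewrite e1.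
Qed.

End MxPart.

Section IVT.
Variable R : realType.
Variable n : nat.

Lemma det_pos (B : 'M[R]_n) :
  (forall s, 0 <= s <= 1 -> \det (1%:M - s *: B) != 0) -> 0 < \det (1%:M - B).
Proof.
move=> H.
pose M : 'M[{poly R}]_n := \matrix_(i, j) ((i == j)%:R%:P - 'X * (B i j)%:P).
have PE : forall s, (\det M).[s] = \det (1%:M - s *: B).
  move=> s; rewrite -[(\det M).[s]]/(horner_eval s (\det M)) -det_map_mx; congr (\det _).
  apply/matrixP => i j; rewrite !mxE /= horner_evalE !hornerE.
  by case: (i == j).
have := PE 1; rewrite scale1r => <-.
rewrite ltNge; apply/negP => Hle.
have [x /andP[x0 x1]] : exists2 x, 0 <= x <= 1 & root (- \det M) x.
  apply: poly_ivt; first exact: ler01.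
  rewrite !hornerN PE scale0r subr0 det1 oppr_le0 ler01 /= oppr_ge0.
  exact: Hle.
rewrite rootN /root PE => /eqP Hx.
by move: (H x); rewrite x0 x1 Hx eqxx => /(_ isT).
Qed.

End IVT.

Section Main.
Variable R : realType.
Variable G : graph.
Variable l : gE G -> R.

Definition aw (e f : gE G) : R := (succ e f)%:R * expR (- l e).

Lemma AE i j : A_Gl l i j = aw (eidx i) (eidx j).
Proof. by rewrite /A_Gl /A_G !mxE /aw /succ; case: (_ && _). Qed.

Definition Sk k : R :=
  \sum_(s : k.+1.-tuple (gE G) | based_circuit s) expR (- path_length l s).

Lemma Fw_eq k (s : k.+1.-tuple (gE G)) :
  \prod_(m < k.+1) aw (tnth s m) (tnth s (ordS m)) =
  if based_circuit s then expR (- path_length l s) else 0.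
Proof.
rewrite /aw big_split /= /path_length -sumrN expR_sum.
case: ifP => Hb.
  rewrite big1 ?mul1r // => m _; move/forallP: Hb => /(_ m).
  by rewrite /succ => ->.
move/negbT: Hb => /forallPn [m Hm].
by rewrite (bigD1 m) //= /succ (negbTE Hm) !mul0r.
Qed.

Lemma tr_S k : \tr (A_Gl l ^+ k.+1) = Sk k.
Proof.
rewrite tr_pow.
transitivity (\sum_(s : k.+1.-tuple (gE G))
   \prod_(m < k.+1) aw (tnth s m) (tnth s (ordS m))).
  rewrite [RHS](reindex (fun t : k.+1.-tuple 'I_#|gE G| => map_tuple (@eidx G) t)) /=.
    apply: eq_bigr => t _; apply: eq_bigr => m _.
    by rewrite AE !tnth_map.
  exists (fun s : k.+1.-tuple (gE G) => map_tuple (@enum_rank (gE G)) s) => t _.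
    by apply: eq_from_tnth => m; rewrite !tnth_map /eidx enum_valK.
  by apply: eq_from_tnth => m; rewrite !tnth_map /eidx enum_rankK.
rewrite /Sk [RHS]big_mkcond /=; apply: eq_bigr => s _; exact: Fw_eq.
Qed.


Lemma A_ge0 i j : 0 <= A_Gl l i j.
Proof. by rewrite AE /aw mulr_ge0 ?ler0n // ltW // expR_gt0. Qed.

Lemma A_reach x y : connect (@succ G) x y ->
  exists r, 0 < (A_Gl l ^+ r) (enum_rank x) (enum_rank y).
Proof.
move/connectP=> [p Hp ->]; elim: p x Hp => [|z p IH] x /=.
  by exists 0%N; rewrite expr0 mxE eqxx ltr01.
case/andP => Hxz Hp; have [r Hr] := IH z Hp.
exists r.+1; rewrite exprS mxE (bigD1 (enum_rank z)) //=.
have h1 : 0 < A_Gl l (enum_rank x) (enum_rank z).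
  by rewrite AE /eidx !enum_rankK /aw Hxz mul1r expR_gt0.
have h2 : 0 <= \sum_(i < #|gE G| | i != enum_rank z)
    A_Gl l (enum_rank x) i * (A_Gl l ^+ r) i (enum_rank (last z p)).
  by apply: sumr_ge0 => i _; apply: mulr_ge0; [exact: A_ge0 | exact: pow_ge0 A_ge0 _ _ _].
have := mulr_gt0 h1 Hr; lra.
Qed.

Hypothesis Hl : length_fun l.

Lemma lbound : exists m0, 0 < m0 /\ forall e, m0 <= l e.
Proof.
have lp := Hl.1.
have s0 : 0 <= \sum_e (l e)^-1 by apply: sumr_ge0 => e _; rewrite invr_ge0 ltW.
exists (1 + \sum_e (l e)^-1)^-1; split; first by rewrite invr_gt0; lra.
move=> e; rewrite -[X in _ <= X]invrK lef_pV2 ?posrE ?invr_gt0 //; last lra.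
rewrite (bigD1 e) //=.
have : 0 <= \sum_(i | i != e) (l i)^-1 by apply: sumr_ge0 => i _; rewrite invr_ge0 ltW.
lra.
Qed.

Lemma ubound : exists D : nat, forall e, l e <= D%:R.
Proof.
have lp := Hl.1.
have s0 : 0 <= \sum_e l e by apply: sumr_ge0 => e _; rewrite ltW.
exists (Num.Def.archi_bound (\sum_e l e)) => e.
apply: le_trans (ltW (archi_boundP s0)).
rewrite (bigD1 e) //=.
have : 0 <= \sum_(i | i != e) l i by apply: sumr_ge0 => i _; rewrite ltW.
lra.
Qed.

Lemma pl_lb m0 k (s : k.+1.-tuple (gE G)) : (forall e, m0 <= l e) ->
  (k.+1)%:R * m0 <= path_length l s.
Proof.
move=> H; have -> : (k.+1)%:R * m0 = \sum_(i < k.+1) m0 by rewrite sumr_const card_ord mulr_natl.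
rewrite /path_length.
by apply: ler_sum => i _.
Qed.

Lemma pl_ub (D : nat) k (s : k.+1.-tuple (gE G)) : (forall e, l e <= D%:R) ->
  path_length l s <= (k.+1 * D)%:R.
Proof.
move=> H; have -> : (k.+1 * D)%:R = \sum_(i < k.+1) (D%:R : R) by rewrite sumr_const card_ord natrM mulr_natl.
rewrite /path_length.
by apply: ler_sum => i _.
Qed.


Lemma countE t k : count_circuits l t k =
  #|[set s : k.+1.-tuple (gE G) | based_circuit s && (path_length l s <= t)]|.
Proof.
rewrite /count_circuits; apply: eq_card => x; rewrite inE.
apply/idP/idP; rewrite in_setE //.
Qed.

Lemma count0 m0 t k : (forall e, m0 <= l e) -> t < (k.+1)%:R * m0 ->
  count_circuits l t k = 0%N.
Proof.
move=> Hm Ht; rewrite countE; apply/eqP; rewrite cards_eq0; apply/eqP/setP => s.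
rewrite !inE; apply/negbTE/negP => /andP[_ H].
have := pl_lb s Hm; lra.
Qed.

Lemma num_circE t : exists K, forall M, (K <= M)%N ->
  num_circuits l t = \sum_(n < M) (count_circuits l t n)%:R.
Proof.
have [m0 [m0p Hm]] := lbound.
pose K := Num.Def.archi_bound (`|t| / m0).
have HK : `|t| / m0 < K%:R by apply: archi_boundP; rewrite divr_ge0 // ltW.
have step : forall M, (K <= M)%N ->
    \sum_(n < M) (count_circuits l t n)%:R = \sum_(n < K) (count_circuits l t n)%:R :> R.
  elim=> [|M IH]; first by rewrite leqn0 => /eqP ->.
  rewrite leq_eqVlt => /orP[/eqP -> //|]; rewrite ltnS => HKM.
  rewrite big_ord_recr /= (count0 Hm) ?addr0; first exact: IH.
  have : K%:R <= M%:R :> R by rewrite ler_nat.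
  have : t <= `|t| by apply: ler_norm.
  rewrite ltr_pdivrMr // in HK.
  have : 0 <= M%:R :> R by apply: ler0n.
  rewrite -natr1. nra.
exists K => M HM; rewrite (step M HM).
apply: norm_lim_near_cst; exists K => // M' /= HM'; exact: step.
Qed.

Lemma count_le_num t k : (count_circuits l t k)%:R <= num_circuits l t.
Proof.
have [K HK] := num_circE t; rewrite (HK (maxn K k.+1)) ?leq_maxl //.
have Hk : (k < maxn K k.+1)%N by rewrite leq_max ltnSn orbT.
rewrite (bigD1 (Ordinal Hk)) //= lerDl; apply: sumr_ge0 => i _; exact: ler0n.
Qed.

Lemma num_ge0 t : 0 <= num_circuits l t.
Proof. exact: le_trans (ler0n _ _) (count_le_num t 0). Qed.


Variable h : R.
Hypothesis He : is_entropy l h.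

Lemma ent_bound h' : h < h' -> exists2 T : R, 0 < T & (forall t : R, T < t -> num_circuits l t <= expR (h' * t)).
Proof.
move=> Hh'.
have := cvgr_lt _ He _ Hh'.
move=> [M [_ HM]].
exists (Num.max M 1); first by rewrite lt_max ltr01 orbT.
move=> t; rewrite gt_max => /andP[Mt t1].
have := HM t Mt; rewrite ltr_pdivrMr; last lra.
case: (ltP 0 (num_circuits l t)) => Np Hln.
  rewrite -(lnK (x:=num_circuits l t)) ?posrE //.
  by rewrite ler_expR ltW.
by apply: le_trans Np (ltW (expR_gt0 _)).
Qed.

Lemma geom_le (q : R) (J : nat) : 0 <= q -> q < 1 -> \sum_(j < J) q ^+ j <= (1 - q)^-1.
Proof.
move=> q0 q1.
have := subrX1 q J.
set S := \sum_(i < J) q ^+ i => H.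
have qJ : 0 <= q ^+ J by apply: exprn_ge0.
rewrite -[(1 - q)^-1]mul1r ler_pdivlMr; last lra.
nra.
Qed.

Hypothesis Hh : h < 1.

Lemma S_bound : exists C : R, exists rho : R, exists K0 : nat,
  [/\ 0 <= C, 0 <= rho, rho < 1 & forall k, (K0 <= k)%N -> Sk k <= C * rho ^+ k.+1].
Proof.
pose h' := (h + 1) / 2.
have Hh1 : h < 1 by exact: Hh.
have hh' : h < h' by rewrite /h'; lra.
have h'1 : h' < 1 by rewrite /h' ltr_pdivrMr //; lra.
have [T T0 HT] := ent_bound hh'.
have [m0 [m0p Hm]] := lbound.
have [D HD] := ubound.
pose q := expR (- (1 - h')).
pose rho := expR (- (1 - h') * m0).
have q0 : 0 < q := expR_gt0 _.
have q1 : q < 1 by rewrite /q -[X in _ < X]expR0 ltr_expR; lra.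
have rho0 : 0 < rho := expR_gt0 _.
have rho1 : rho < 1 by rewrite /rho -[X in _ < X]expR0 ltr_expR; nra.
pose K0 := Num.Def.archi_bound (T / m0).
have HK0 : T / m0 < K0%:R by apply: archi_boundP; rewrite divr_ge0 // ltW.
exists (expR h' * expR (1 - h') / (1 - q)), rho, K0; split.
- by apply: divr_ge0; [apply: mulr_ge0; apply: ltW; apply: expR_gt0 | lra].
- exact: ltW.
- exact: rho1.
move=> k Hk.
pose a := (k.+1)%:R * m0 - 1.
have aT : T < a + 1.
  rewrite ltr_pdivrMr // in HK0.
  have : K0%:R <= (k.+1)%:R :> R by rewrite ler_nat; lia.
  rewrite /a; nra.
pose J := (k.+1 * D).+1.
pose w (s : k.+1.-tuple (gE G)) (j : 'I_J) : R :=
  if (a + (j : nat)%:R < path_length l s) && (path_length l s <= a + (j : nat)%:R + 1)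
  then expR (- (a + (j : nat)%:R)) else 0.
have w0 : forall s j, 0 <= w s j.
  by move=> s j; rewrite /w; case: ifP => _ //; apply: ltW; apply: expR_gt0.
have step1 : Sk k <= \sum_(s | based_circuit s) \sum_(j < J) w s j.
  apply: ler_sum => s _.
  set x := path_length l s.
  have xlb : a + 1 <= x by have := pl_lb s Hm; rewrite /a /x; lra.
  have xub : x <= (k.+1 * D)%:R := pl_ub s HD.
  have PD : x <= a + (k.+1 * D)%:R + 1.
    have : 0 <= (k.+1)%:R * m0 by apply: mulr_ge0; [apply: ler0n|apply: ltW].
    rewrite /a; lra.
  have exP : exists j : nat, x <= a + j%:R + 1 by exists (k.+1 * D)%N.
  case: (@ex_minnP (fun j : nat => x <= a + j%:R + 1) exP) => j Hj Hmin.
  have jJ : (j < J)%N by rewrite ltnS; apply: Hmin.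
  have ajx : a + j%:R < x.
    move: Hj Hmin jJ; case: j => [|j] Hj Hmin _; first by rewrite addr0; lra.
    have : ~~ (x <= a + j%:R + 1).
      by apply/negP => H; have := Hmin j H; rewrite ltnn.
    rewrite -ltNge -natr1; lra.
  rewrite (bigD1 (Ordinal jJ)) //= {1}/w /= ajx Hj /=.
  have : 0 <= \sum_(i < J | i != Ordinal jJ) w s i by apply: sumr_ge0 => i _.
  have : expR (- x) <= expR (- (a + j%:R)) by rewrite ler_expR; lra.
  lra.
have step2 : forall j : 'I_J, \sum_(s | based_circuit s) w s j <=
    expR (- (a + (j : nat)%:R)) * (count_circuits l (a + (j : nat)%:R + 1) k)%:R.
  move=> j; rewrite countE -sum1_card natr_sum big_distrr /=.
  rewrite big_mkcond [X in _ <= X]big_mkcond /=; apply: ler_sum => s _; rewrite inE /w.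
  case: (based_circuit s) => //=.
  case: ifP => [/andP[_ ->]|_]; first by rewrite mulr1.
  by case: ifP => _; rewrite ?mulr1 ?lexx // ltW // expR_gt0.
have e4 : forall j : nat, expR (- (a + j%:R)) * expR (h' * (a + j%:R + 1)) =
    expR h' * expR (1 - h') * rho ^+ k.+1 * q ^+ j.
  move=> j; rewrite /rho /q -!expRM_natl -!expRD; congr expR; rewrite /a; ring.
apply: (le_trans step1); rewrite exchange_big /=.
apply: le_trans (ler_sum _ (fun j _ => step2 j)) _.
have step3 : forall j : 'I_J, expR (- (a + (j : nat)%:R)) * (count_circuits l (a + (j : nat)%:R + 1) k)%:R
   <= expR h' * expR (1 - h') * rho ^+ k.+1 * q ^+ j.
  move=> j; rewrite -e4; apply: ler_wpM2l; first by apply: ltW; apply: expR_gt0.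
  apply: le_trans (count_le_num _ _) _; apply: HT.
  have : 0 <= (j : nat)%:R :> R by apply: ler0n.
  lra.
apply: le_trans (ler_sum _ (fun j _ => step3 j)) _.
rewrite -big_distrr /= [X in _ <= X]mulrAC.
apply: ler_wpM2l.
  by apply: mulr_ge0; [apply: mulr_ge0; apply: ltW; apply: expR_gt0 | apply: exprn_ge0; apply: ltW].
by apply: geom_le; [apply: ltW|].
Qed.

Hypothesis Hc : connected_graph G.
Hypothesis Hval : forall v : gV G, valence v != 1%N /\ valence v != 2%N.

Lemma A_decay : exists rho : R, exists K0 : nat, [/\ 0 <= rho, rho < 1 &
  forall i j, exists Cij : R, 0 <= Cij /\
    forall k, (K0 <= k)%N -> (A_Gl l ^+ k.+1) i j <= Cij * rho ^+ k.+1].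
Proof.
have [C [rho [K0 [C0 r0 r1 HS]]]] := S_bound.
exists rho, K0; split => // i j.
have [r Hr] := A_reach (irred Hval Hc (eidx j) (eidx i)).
rewrite /eidx !enum_valK in Hr.
exists (C / (A_Gl l ^+ r) j i); split; first by apply: divr_ge0 => //; apply: ltW.
move=> k Hk.
have H1 := pow_mul_le A_ge0 k.+1 r i j.
have H2 := diag_le_tr (fun i => pow_ge0 A_ge0 (k.+1 + r) i i) i.
rewrite addSn tr_S in H2.
have H3 := HS (k + r)%N (leq_trans Hk (leq_addr _ _)).
have H4 : rho ^+ (k + r).+1 <= rho ^+ k.+1.
  rewrite -addSn exprD; apply: ler_piMr; first exact: exprn_ge0.
  by apply: exprn_ile1 => //; apply: ltW.
rewrite mulrAC ler_pdivlMr //.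
apply: le_trans H1 _; apply: le_trans H2 _; apply: le_trans H3 _.
by apply: ler_wpM2l.
Qed.

Lemma decay_le (x Dd rho : R) (K0 : nat) : 0 <= Dd -> 0 <= rho -> rho < 1 ->
  (forall k, (K0 <= k)%N -> x <= Dd * rho ^+ k.+1) -> x <= 0.
Proof.
move=> D0 r0 r1 H; rewrite leNgt; apply/negP => x0.
have rn : `|rho| < 1 by rewrite ger0_norm.
have z0 : 0 < x / (Dd + 1) by apply: divr_gt0 => //; lra.
have [N _ HN] := cvgr_lt _ (cvg_expr rn) _ z0.
pose k := maxn N K0.
have Hk : rho ^+ k < x / (Dd + 1) by apply: HN; rewrite /= leq_maxl.
have := H k (leq_maxr _ _).
have : rho ^+ k.+1 <= rho ^+ k by rewrite exprS ler_piMl // ?exprn_ge0 // ltW.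
have : 0 <= rho ^+ k.+1 by apply: exprn_ge0.
rewrite ltr_pdivlMr in Hk; last lra.
nra.
Qed.

Lemma det_ne0 s : 0 <= s <= 1 -> \det (1%:M - s *: A_Gl l) != 0.
Proof.
case/andP => s0 s1.
have [rho [K0 [r0 r1 HA]]] := A_decay.
have [Cf HCf] := @choice _ R (fun ij Cij => 0 <= Cij /\
  forall k, (K0 <= k)%N -> (A_Gl l ^+ k.+1) ij.1 ij.2 <= Cij * rho ^+ k.+1)
  (fun ij => HA ij.1 ij.2).
apply/negP => /det0P [v vn0 Hv].
have Hv' : v = s *: (v *m A_Gl l).
  by move/eqP: Hv; rewrite mulmxBr mulmx1 -scalemxAr subr_eq0 => /eqP.
pose u j := `|v 0 j|.
have u0 : forall j, 0 <= u j by move=> j; apply: normr_ge0.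
have c1 : forall j, u j <= \sum_i u i * A_Gl l i j.
  move=> j; rewrite {1}/u.
  have -> : v 0 j = s * \sum_i v 0 i * A_Gl l i j by rewrite {1}Hv' !mxE.
  have H : `|\sum_i v 0 i * A_Gl l i j| <= \sum_i u i * A_Gl l i j.
    apply: le_trans (ler_norm_sum _ _ _) _; apply: ler_sum => i _.
    by rewrite normrM (ger0_norm (A_ge0 i j)).
  rewrite normrM ger0_norm //.
  have : 0 <= `|\sum_i v 0 i * A_Gl l i j| by apply: normr_ge0.
  nra.
have c2 : forall k j, u j <= \sum_i u i * (A_Gl l ^+ k) i j.
  elim=> [|k IH] j.
    rewrite expr0 (bigD1 j) //= big1 ?addr0; last first.
      by move=> i nij; rewrite mxE (negbTE nij) mulr0.
    by rewrite mxE eqxx mulr1.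
  apply: le_trans (c1 j) _; rewrite exprSr.
  under [X in _ <= X]eq_bigr do rewrite mxE big_distrr.
  rewrite exchange_big /=; apply: ler_sum => m _.
  under [X in _ <= X]eq_bigr do rewrite mulrA.
  rewrite -big_distrl /=; apply: ler_wpM2r; first exact: A_ge0.
  exact: IH.
have c3 : forall j k, (K0 <= k)%N -> u j <= (\sum_i u i * Cf (i, j)) * rho ^+ k.+1.
  move=> j k Hk; apply: le_trans (c2 k.+1 j) _; rewrite big_distrl; apply: ler_sum => i _.
  change (u i * (A_Gl l ^+ k.+1) i j <= u i * Cf (i, j) * rho ^+ k.+1).
  rewrite -mulrA; apply: ler_wpM2l; first exact: u0.
  exact: (HCf (i, j)).2 k Hk.
have v0 : v = 0.
  apply/rowP => j; rewrite mxE; apply/eqP; rewrite -normr_eq0; apply/eqP.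
  apply: le_anti; rewrite normr_ge0 andbT.
  apply: (@decay_le _ (\sum_i u i * Cf (i, j)) rho K0) => //.
    by apply: sumr_ge0 => i _; apply: mulr_ge0 => //; exact: (HCf (i, j)).1.
  exact: c3.
by rewrite v0 eqxx in vn0.
Qed.

End Main.


Unset Implicit Arguments.

Theorem mainTheorem8 (R : realType) (G : graph) (l : gE G -> R) (h : R) :
  connected_graph G ->
  euler_char G < 0 ->
  (forall v : gV G, valence v != 1%N /\ valence v != 2%N) ->
  length_fun l ->
  is_entropy l h ->
  h < 1 ->
  0 < F_G l.
Proof.
move=> Hc _ Hval Hl He Hh.
apply: det_pos => s Hs.
exact: (det_ne0 Hl He Hh Hc Hval Hs).
Qed.
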